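(* Let $\mathcal B$ be a connected building set on $[n+1]$ whose nested set complex $K_{\mathcal B}$ is a flag complex. Then for every subset $I\subseteq[n+1]$ of even cardinality, the complex $(K_{\mathcal B})_I$ is homotopy equivalent to $K^{\mathrm{odd}}_{\mathcal B|_I}$.
   Context: A building set on a finite set $S\subset\mathbb N$ is a collection $\mathcal B$ of nonempty subsets of $S$ containing every singleton, such that $I,J\in\mathcal B$, $I\cap J\neq\emptyset$ imply $I\cup J\in\mathcal B$; its connected components are its inclusion-maximal elements; it is connected if $S\in\mathcal B$; $\mathcal B|_I=\{J\in\mathcal B:J\subseteq I\}$. For a connected building set $\mathcal B$ on $[n+1]$, the nested set complex $K_{\mathcal B}$ is the simplicial complex on vertex set $\mathcal B\setminus\{[n+1]\}$ whose simplices are the subsets $N\subseteq\mathcal B\setminus\{[n+1]\}$ such that (i) any $I,J\in N$ satisfy $I\subseteq J$, $J\subseteq I$ or $I\cap J=\emptyset$, and (ii) for any $r\ge2$ pairwise disjoint $I_1,\dots,I_r\in N$, $I_1\cup\dots\cup I_r\notin\mathcal B$. A simplicial complex is flag if every set of vertices that are pairwise joined by edges forms a simplex. For $I\subseteq[n+1]$ of even cardinality, $(K_{\mathcal B})_I$ is the full subcomplex of $K_{\mathcal B}$ induced on the vertices $J$ with $|J\cap I|$ odd, and $K^{\mathrm{odd}}_{\mathcal B|_I}$ is the full subcomplex of $K_{\mathcal B}$ induced on the vertices $J\in\mathcal B$ with $J\subseteq I$ and $|J|$ odd. *)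

(* Defs.v *)
From HB Require Import structures.
From mathcomp Require Import all_boot all_order all_algebra.
From mathcomp Require Import all_classical all_reals.
From mathcomp Require Import topology normedtype.
Import numFieldNormedType.Exports.
Set Implicit Arguments. Unset Strict Implicit. Unset Printing Implicit Defensive.
Import Order.TTheory GRing.Theory Num.Theory.
Local Open Scope ring_scope.

Definition building_set (T : finType) (B : {set {set T}}) : Prop :=
  [/\ finset.set0 \notin B,
      (forall x : T, [set x] \in B) &
      (forall I J, I \in B -> J \in B -> I :&: J != finset.set0 -> I :|: J \in B)].

Definition connected_bs (T : finType) (B : {set {set T}}) : Prop :=
  [set: T] \in B.

Definition nested (T : finType) (B : {set {set T}}) (N : {set {set T}}) : Prop :=
  [/\ N \subset B :\ [set: T],
      (forall I J, I \in N -> J \in N ->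
         [|| I \subset J, J \subset I | [disjoint I & J]]) &
      (forall M : {set {set T}}, M \subset N -> (2 <= #|M|)%N ->
         (forall I J, I \in M -> J \in M -> I != J -> [disjoint I & J]) ->
         \bigcup_(J in M) J \notin B)].

Definition flag (V : finType) (face : {set V} -> Prop) : Prop :=
  forall N : {set V},
    (forall u v, u \in N -> v \in N -> face [set u; v]) -> face N.

Definition full_sub (V : finType) (face : {set V} -> Prop) (W : {pred V})
  : {set V} -> Prop :=
  fun N => N \subset W /\ face N.

Definition KB_I (T : finType) (B : {set {set T}}) (I : {set T}) :=
  full_sub (nested B) [pred J : {set T} | odd #|J :&: I|].

Definition KB_odd (T : finType) (B : {set {set T}}) (I : {set T}) :=
  full_sub (nested B) [pred J : {set T} | [&& J \in B, J \subset I & odd #|J|]].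

Local Open Scope classical_set_scope.

(* Geometric realization of a simplicial complex on a finite vertex type V,
   as the set of barycentric-coordinate functions V -> R whose support is a
   face, inside the product space R^V. *)
Definition realization (R : realType) (V : finType) (face : {set V} -> Prop)
  : set {ptws V -> R} :=
  [set f | [/\ (forall v, 0 <= f v), \sum_(v : V) f v = 1 &
               face [set v | f v != 0]%SET]].

Definition homotopic_on (R : realType) (X Y : topologicalType)
  (A : set X) (B : set Y) (f g : X -> Y) : Prop :=
  exists H : X * R -> Y,
    [/\ {within A `*` [set t : R | 0 <= t <= 1], continuous H},
        (forall x t, A x -> 0 <= t <= 1 -> B (H (x, t))),
        (forall x, A x -> H (x, 0) = f x) &
        (forall x, A x -> H (x, 1) = g x)].

Definition homotopy_equivalent (R : realType) (X Y : topologicalType)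
  (A : set X) (B : set Y) : Prop :=
  exists (f : X -> Y) (g : Y -> X),
    [/\ {within A, continuous f}, f @` A `<=` B,
        {within B, continuous g}, g @` B `<=` A &
        homotopic_on R A A (g \o f) id /\ homotopic_on R B B (f \o g) id].

Arguments realization R {V} face.
Arguments homotopic_on R {X Y} A B f g.
Arguments homotopy_equivalent R {X Y} A B.

(* Main.v *)
Require Import Defs.
From HB Require Import structures.
From mathcomp Require Import all_boot all_order all_algebra.
From mathcomp Require Import all_classical all_reals.
From mathcomp Require Import topology normedtype.

Import numFieldNormedType.Exports.
Set Implicit Arguments. Unset Strict Implicit. Unset Printing Implicit Defensive.
Import Order.TTheory GRing.Theory Num.Theory.
From mathcomp Require Import fintype finset.
From mathcomp Require Import lra.

Section Topo.
Local Open Scope ring_scope.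
Local Open Scope classical_set_scope.
Variables (R : realType) (V : finType).
Local Notation P := {ptws V -> R}.

Lemma ptws_continuous (X : topologicalType) (h : X -> P) :
  (forall v, continuous (fun x => h x v)) -> continuous h.
Proof.
move=> hc x; apply/cvg_sup => i.
move=> U /= [W [[W' oW' <-] Wx]] sWU.
apply: (filterS sWU); apply: (hc i x); exact: open_nbhs_nbhs.
Qed.

Lemma eval_fst_continuous (v : V) : continuous (fun p : P * R => p.1 v).
Proof.
move=> p; apply: (cvg_comp (fun p : P * R => p.1) (fun f : P => f v)).
  exact: cvg_fst.
exact: (@proj_continuous V (fun _ => R) v p.1).
Qed.

Lemma snd_continuous' : continuous (fun p : P * R => p.2).
Proof. by move=> p; exact: cvg_snd. Qed.

Lemma fst_continuous' : continuous (fun p : P * R => p.1).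
Proof. by move=> p; exact: cvg_fst. Qed.

Lemma sum_continuous (X : topologicalType) (I : Type) (s : seq I)
  (F : I -> X -> R) :
  (forall i, continuous (F i)) -> continuous (fun x => \sum_(i <- s) F i x).
Proof.
move=> Fc; elim: s => [|a s IH].
  under eq_fun do rewrite big_nil. by move=> x; exact: cvg_cst.
under eq_fun do rewrite big_cons.
move=> x; apply: (@cvgD _ R^o); [exact: Fc | exact: IH].
Qed.

Lemma mul_continuous (X : topologicalType) (f g : X -> R) :
  continuous f -> continuous g -> continuous (fun x => f x * g x).
Proof. move=> fc gc x; exact: (@cvgM R X (nbhs x) _ f g _ _ (fc x) (gc x)). Qed.

Lemma add_continuous (X : topologicalType) (f g : X -> R) :
  continuous f -> continuous g -> continuous (fun x => f x + g x).
Proof. move=> fc gc x; exact: (@cvgD _ R^o X (nbhs x) _ f g _ _ (fc x) (gc x)). Qed.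

Lemma sub_continuous (X : topologicalType) (f g : X -> R) :
  continuous f -> continuous g -> continuous (fun x => f x - g x).
Proof. move=> fc gc x; exact: (@cvgB _ R^o X (nbhs x) _ f g _ _ (fc x) (gc x)). Qed.

Definition clamp (a : R) : R := Num.min 1 (Num.max 0 a).

Lemma clamp_continuous (X : topologicalType) (f : X -> R) :
  continuous f -> continuous (fun x => clamp (f x)).
Proof.
move=> fc x; rewrite /clamp.
apply: (@continuous_min R X (fun=> 1) (fun x => Num.max 0 (f x))).
  exact: cvg_cst.
apply: (@continuous_max R X (fun=> 0) f); first exact: cvg_cst.
exact: fc.
Qed.

End Topo.

Section Comb.
Variables (n : nat) (B : {set {set 'I_n.+1}}) (I : {set 'I_n.+1}).
Local Notation T := 'I_n.+1.
Hypothesis bsB : building_set B.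

Lemma B_nonempty (E : {set T}) : E \in B -> E != finset.set0.
Proof. by case: bsB => h _ _ EB; apply: contraNneq h => <-. Qed.

Lemma B_single (x : T) : [set x] \in B.
Proof. by case: bsB. Qed.

Lemma union_in (X Y : {set T}) : X \in B -> Y \in B -> ~~ [disjoint X & Y] -> X :|: Y \in B.
Proof. by case: bsB => _ _ h XB YB; rewrite -setI_eq0; apply: h. Qed.

Lemma meet (A A' : {set T}) (x : T) : x \in A -> x \in A' -> ~~ [disjoint A & A'].
Proof. by move=> xA xB; apply/negP => /disjointFr /(_ xA); rewrite xB. Qed.

Definition comp (A : {set T}) (x : T) : {set T} :=
  [arg max_(D > [set x] | (D \in B) && (x \in D) && (D \subset A)) #|D|].

Definition maximal_in (A D : {set T}) :=
  forall E, E \in B -> E \subset A -> ~~ [disjoint E & D] -> E \subset D.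

Lemma comp_spec (A : {set T}) (x : T) : x \in A ->
  [/\ comp A x \in B, x \in comp A x, comp A x \subset A & maximal_in A (comp A x)].
Proof.
move=> xA; rewrite /comp; case: arg_maxnP.
  by rewrite B_single set11 sub1set xA.
move=> D /andP[/andP[DB xD] DA] Dmax; split=> // E EB EA EDn.
have EDB : E :|: D \in B by apply: union_in.
have := Dmax (E :|: D); rewrite EDB (subsetP (subsetUr E D)) // subUset EA DA.
move=> /(_ isT) le.
have ED : E :|: D = D.
  apply/eqP; rewrite eq_sym eqEcard subsetUr; exact: le.
by rewrite -ED subsetUl.
Qed.

Lemma comp_same (A : {set T}) (x y : T) : x \in A -> y \in comp A x -> comp A y = comp A x.
Proof.
move=> xA ycx; have [cxB xcx cxA cxM] := comp_spec xA.
have yA : y \in A by apply: (subsetP cxA).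
have [cyB ycy cyA cyM] := comp_spec yA.
apply/eqP; rewrite eqEsubset; apply/andP; split.
  by apply: cxM => //; apply: (meet ycy).
by apply: cyM => //; apply: (meet ycx).
Qed.

Lemma odd_sum_ex (P : {set {set T}}) :
  odd (\sum_(D in P) #|D|) -> exists2 D, D \in P & odd #|D|.
Proof.
move=> h; case: (boolP [exists D in P, odd #|D|]) => [/exists_inP // | /exists_inPn hn].
suff : ~~ odd (\sum_(D in P) #|D|) by rewrite h.
elim/big_ind: _ => //.
  by move=> a b ha hb; rewrite oddD (negbTE ha) (negbTE hb).
Qed.

Lemma exists_odd_comp (A : {set T}) : odd #|A| -> exists2 x, x \in A & odd #|comp A x|.
Proof.
move=> oA; set P := [set comp A x | x in A].
have partP : partition P A.
  apply/and3P; split.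
  - apply/eqP/setP => y; apply/bigcupP/idP.
      by move=> [D /imsetP[x xA ->]] yD; have [_ _ /subsetP h _] := comp_spec xA; apply: h.
    by move=> yA; exists (comp A y); [apply: imset_f | have [] := comp_spec yA].
  - apply/trivIsetP => D1 D2 /imsetP[x1 x1A ->] /imsetP[x2 x2A ->] neq.
    rewrite -setI_eq0; apply/negPn/negP => /set0Pn [z]; rewrite inE => /andP [z1 z2]; move: neq.
    by rewrite -(comp_same x1A z1) -(comp_same x2A z2) eqxx.
  - apply/imsetP => -[x xA] /esym c0.
    by have [_ + _ _] := comp_spec xA; rewrite c0 inE.
move: oA; rewrite (card_partition partP) => /odd_sum_ex [D /imsetP[x xA ->] oD].
by exists x.
Qed.

Definition C (J : {set T}) : {set T} :=
  if [pick x in J :&: I | odd #|comp (J :&: I) x|] is Some x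
  then comp (J :&: I) x else J.

Lemma C_spec (J : {set T}) : odd #|J :&: I| ->
  [/\ C J \in B, C J \subset J :&: I, odd #|C J| & maximal_in (J :&: I) (C J)].
Proof.
move=> oJ; rewrite /C; case: pickP => [x /andP[xA ox] | none].
  by have [] := comp_spec xA.
have [x xA ox] := exists_odd_comp oJ.
by have := none x; rewrite xA ox.
Qed.

Lemma C_id (J : {set T}) : J \in B -> J \subset I -> C J = J.
Proof.
move=> JB JI; rewrite /C (setIidPl JI); case: pickP => [x /andP[xA ox] | //].
have [cB xc cA cM] := comp_spec xA.
apply/eqP; rewrite eqEsubset cA /=; apply: cM => //.
exact: (meet xA xc).
Qed.

Definition compat (u v : {set T}) :=
  [|| u \subset v, v \subset u | [disjoint u & v] && (u :|: v \notin B)].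

Lemma compat_sym (u v : {set T}) : compat u v = compat v u.
Proof. by rewrite /compat disjoint_sym setUC; case: (u \subset v); case: (v \subset u). Qed.

Lemma nonempty_ex (E : {set T}) : E \in B -> exists y, y \in E.
Proof. by move/B_nonempty/set0Pn. Qed.

Lemma max_compat (A D E : {set T}) : D \in B -> D \subset A -> maximal_in A D -> E \in B ->
  E \subset A -> compat E D.
Proof.
move=> DB DA DM EB EA; rewrite /compat.
case: (boolP [disjoint E & D]) => dis; last by rewrite DM.
case: (boolP (E :|: D \in B)) => EDB; last by rewrite /= !orbT.
have : E :|: D \subset D.
  apply: DM => //; first by rewrite subUset EA.
  have [y yD] := nonempty_ex DB.
  by apply: (meet _ yD); rewrite inE yD orbT.
by rewrite subUset => /andP[->].
Qed.


Lemma union_absorb (X X' Y Y' : {set T}) :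
  X \subset Y -> X' \subset Y' -> X :|: X' :|: Y :|: Y' = Y :|: Y'.
Proof.
move=> h h'; apply/setP => z; rewrite !inE; move: (subsetP h z) (subsetP h' z).
case: (z \in X) => [/(_ isT) ->|_]; case: (z \in X') => [/(_ isT) ->|_];
  by rewrite ?orbT ?orbF //=; case: (z \in Y).
Qed.

Lemma compat_CC (J J' : {set T}) : J \in B -> J' \in B ->
  odd #|J :&: I| -> odd #|J' :&: I| -> compat J J' -> compat (C J) (C J').
Proof.
move=> JB J'B oJ oJ' c.
have [CB CA oC CM] := C_spec oJ; have [C'B C'A oC' C'M] := C_spec oJ'.
have CJ : C J \subset J := subset_trans CA (subsetIl J I).
have C'J' : C J' \subset J' := subset_trans C'A (subsetIl J' I).
case/or3P: c => [sJJ' | sJ'J | /andP[dis nU]].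
- apply: (max_compat C'B C'A C'M CB); exact: subset_trans CA (setSI I sJJ').
- rewrite compat_sym; apply: (max_compat CB CA CM C'B).
  exact: subset_trans C'A (setSI I sJ'J).
- have dC : [disjoint C J & C J'] := disjointW CJ C'J' dis.
  rewrite /compat dC /=; apply/orP; right; apply/orP; right.
  apply/negP => UB.
  have [y yC] := nonempty_ex CB; have [y' yC'] := nonempty_ex C'B.
  have h1 : (C J :|: C J') :|: J \in B.
    by apply: union_in => //; apply: (meet (x:=y)); rewrite ?inE ?yC ?(subsetP CJ).
  have h2 : (C J :|: C J') :|: J :|: J' \in B.
    by apply: union_in => //; apply: (meet (x:=y')); rewrite ?inE ?yC' ?(subsetP C'J') ?orbT.
  by move: h2; rewrite union_absorb // (negbTE nU).
Qed.

Lemma compat_CJ (J J' : {set T}) : J \in B -> J' \in B ->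
  odd #|J :&: I| -> compat J J' -> (J' \subset I) || ~~ (J' \proper J) ->
  compat (C J) J'.
Proof.
move=> JB J'B oJ c h.
have [CB CA oC CM] := C_spec oJ.
have CJ : C J \subset J := subset_trans CA (subsetIl J I).
case/or3P: c => [sJJ' | sJ'J | /andP[dis nU]].
- by rewrite /compat (subset_trans CJ sJJ').
- case/orP: h => [J'I | np].
    rewrite compat_sym; apply: (max_compat CB CA CM J'B).
    by rewrite subsetI sJ'J J'I.
  move: np; rewrite properE sJ'J /= negbK => sJJ'.
  by rewrite /compat (subset_trans CJ sJJ').
- have dC : [disjoint C J & J'] := disjointWl CJ dis.
  rewrite /compat dC /=; apply/orP; right; apply/orP; right.
  apply/negP => UB.
  have [y yC] := nonempty_ex CB.
  have h1 : (C J :|: J') :|: J \in B.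
    by apply: union_in => //; apply: (meet (x:=y)); rewrite ?inE ?yC ?(subsetP CJ).
  by move: h1; rewrite -setUA (setUC J') setUA (setUidPr CJ) (negbTE nU).
Qed.

Lemma bigcup_pair (u v : {set T}) : \bigcup_(J in [set u; v]) J = u :|: v.
Proof.
apply/setP=> z; apply/bigcupP/idP.
  by move=> [J /set2P[->|->]] zJ; rewrite inE zJ ?orbT.
rewrite inE => /orP[zu|zv]; [exists u | exists v] => //; by rewrite ?set21 ?set22.
Qed.

Lemma M_pair (M : {set {set T}}) (u v : {set T}) :
  M \subset [set u; v] -> (2 <= #|M|)%N -> M = [set u; v] /\ u != v.
Proof.
move=> sub c2; have le := subset_leq_card sub; move: (le); rewrite cards2.
case: (eqVneq u v) => [->|neq] /= le2; first by move: (leq_trans c2 le2).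
split=> //; apply/eqP; rewrite eqEcard sub cards2 neq /=; exact: c2.
Qed.

Lemma nested_sub (N N' : {set {set T}}) : nested B N -> N' \subset N -> nested B N'.
Proof.
case=> s c m sub; split.
- exact: subset_trans sub s.
- by move=> X Y XN YN; apply: c; apply: (subsetP sub).
- by move=> M MN; apply: m; apply: subset_trans MN sub.
Qed.

Lemma nested_pair_compat (u v : {set T}) : nested B [set u; v] -> compat u v.
Proof.
case=> s c m; have := c u v (set21 u v) (set22 u v).
case/or3P => [h|h|dis]; first by rewrite /compat h.
  by rewrite /compat h orbT.
case: (eqVneq u v) => [->|neq]; first by rewrite /compat subxx.
rewrite /compat dis /=; apply/orP; right; apply/orP; right.
have := m [set u; v] (subxx _); rewrite bigcup_pair cards2 neq; apply => //.
move=> X Y /set2P[->|->] /set2P[->|->]; rewrite ?eqxx // => _.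
by rewrite disjoint_sym.
Qed.

Lemma compat_nested_pair (u v : {set T}) : u \in B -> v \in B ->
  u != setT -> v != setT -> compat u v -> nested B [set u; v].
Proof.
move=> uB vB uT vT c; split.
- by apply/subsetP => w /set2P[->|->]; rewrite in_setD1 ?uB ?vB ?uT ?vT.
- move=> X Y /set2P[->|->] /set2P[->|->]; rewrite ?subxx //.
    by move: c; rewrite /compat => /or3P[->|->|/andP[d _]]; rewrite ?orbT // d ?orbT.
  by move: c; rewrite /compat => /or3P[->|->|/andP[d _]]; rewrite ?orbT // disjoint_sym d ?orbT.
- move=> M sub c2 pw; have [eM neq] := M_pair sub c2; subst M.
  rewrite bigcup_pair.
  have dis : [disjoint u & v] by apply: pw; rewrite ?set21 ?set22 ?neq.
  have [y yu] := nonempty_ex uB; have [y' yv] := nonempty_ex vB.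
  move: c; rewrite /compat => /or3P[suv|svu|/andP[_ //]].
    by have := meet yu (subsetP suv y yu); rewrite dis.
  by have := meet (subsetP svu y' yv) yv; rewrite dis.
Qed.


Lemma nested_mem (N : {set {set T}}) v : nested B N -> v \in N -> v \in B /\ v != setT.
Proof.
case=> s _ _ vN; have := subsetP s v vN; rewrite in_setD1 => /andP[-> ->]; done.
Qed.

Lemma C_in (v : {set T}) : v \in B -> v != setT -> odd #|v :&: I| ->
  [/\ C v \in B, C v != setT, C v \subset I & odd #|C v :&: I|].
Proof.
move=> vB vT ov; have [CB CA oC _] := C_spec ov.
have CI : C v \subset I := subset_trans CA (subsetIr v I).
have Cv : C v \subset v := subset_trans CA (subsetIl v I).
split=> //; last by rewrite (setIidPl CI).
apply: contraNneq vT => CT; apply/eqP; apply/setP => z.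
by rewrite inE; apply: (subsetP Cv); rewrite CT inE.
Qed.

Lemma supp_nested (σ S : {set {set T}}) (m c : {set T} -> bool) :
  flag (nested B) -> nested B σ -> (forall v, v \in σ -> odd #|v :&: I|) ->
  (forall v v', v \in σ -> v' \in σ -> c v -> m v' -> ~~ (v' \proper v)) ->
  (forall u, u \in S -> exists2 v, v \in σ & ((m v && (u == v)) || (c v && (u == C v)))) ->
  nested B S /\ (forall u, u \in S -> odd #|u :&: I|).
Proof.
move=> fl ns oσ gap hS; split; last first.
  move=> u /hS [v vσ /orP[/andP[_ /eqP->]|/andP[_ /eqP->]]]; first exact: oσ.
  by have [vB vT] := nested_mem ns vσ; have [] := C_in vB vT (oσ v vσ).
apply: fl => u1 u2 /hS [v1 v1σ h1] /hS [v2 v2σ h2].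
have [v1B v1T] := nested_mem ns v1σ; have [v2B v2T] := nested_mem ns v2σ.
have [C1B C1T _ _] := C_in v1B v1T (oσ v1 v1σ).
have [C2B C2T _ _] := C_in v2B v2T (oσ v2 v2σ).
have n12 : nested B [set v1; v2].
  by apply: nested_sub ns _; apply/subsetP => w /set2P[->|->].
have c12 := nested_pair_compat n12.
case/orP: h1 => /andP[k1 /eqP->]; case/orP: h2 => /andP[k2 /eqP->].
- exact: n12.
- apply: compat_nested_pair => //; rewrite compat_sym.
  apply: compat_CJ => //; first exact: oσ.
    by rewrite compat_sym.
  by rewrite (gap v2 v1) // orbT.
- apply: compat_nested_pair => //.
  apply: compat_CJ => //; first exact: oσ.
  by rewrite (gap v1 v2) // orbT.
- apply: compat_nested_pair => //.
  by apply: compat_CC => //; apply: oσ.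
Qed.

End Comb.

Local Open Scope ring_scope.
Section Real.
Variables (R : realType).

Lemma clamp_ge0 (a : R) : 0 <= clamp a.
Proof. rewrite /clamp; rewrite le_min ler01 /=. by rewrite le_max lexx. Qed.

Lemma clamp_le1 (a : R) : clamp a <= 1.
Proof. by rewrite /clamp ge_min lexx. Qed.

Lemma clamp_eq0 (a : R) : a <= 0 -> clamp a = 0.
Proof.
move=> h; rewrite /clamp.
have -> : Num.max 0 a = 0 by apply/max_idPl.
by apply/min_idPr; rewrite ler01.
Qed.

Lemma clamp_eq1 (a : R) : 1 <= a -> clamp a = 1.
Proof.
move=> h; rewrite /clamp.
have -> : Num.max 0 a = a by apply/max_idPr; apply: le_trans h; rewrite ler01.
by apply/min_idPl.
Qed.

Lemma clamp_neq0 (a : R) : clamp a != 0 -> 0 < a.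
Proof. by apply: contraNT; rewrite -leNgt => /clamp_eq0 ->. Qed.

Variable n : nat.
Definition mu (s : nat) (t : R) : R := clamp ((n.+2)%:R * t - (n.+1)%:R + s%:R).

Lemma mu0 s : (s <= n.+1)%N -> mu s 0 = 0.
Proof.
move=> h; apply: clamp_eq0; rewrite mulr0 add0r.
have : (s%:R : R) <= (n.+1)%:R by rewrite ler_nat.
lra.
Qed.

Lemma mu1 s : mu s 1 = 1.
Proof.
apply: clamp_eq1; rewrite mulr1.
have : 0 <= (s%:R : R) by [].
have e : ((n.+2)%:R : R) = (n.+1)%:R + 1 by rewrite natr1.
rewrite e => hs; lra.
Qed.

Lemma mu_gap s s' t : (s' < s)%N -> mu s' t != 0 -> mu s t = 1.
Proof.
move=> lt /clamp_neq0 h; apply: clamp_eq1.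
have : (s'%:R : R) + 1 <= s%:R by rewrite natr1 ler_nat.
lra.
Qed.

Lemma mu_bounds s t : 0 <= mu s t <= 1.
Proof. by rewrite clamp_ge0 clamp_le1. Qed.


Lemma sum_delta (V : finType) (x : V -> R) (u : V) : \sum_v x v * (v == u)%:R = x u.
Proof.
rewrite (bigD1 u) //= eqxx mulr1 big1 ?addr0 // => v vu.
by rewrite (negbTE vu) mulr0.
Qed.

Lemma sum_delta1 (V : finType) (v : V) : \sum_u ((v == u)%:R : R) = 1.
Proof.
rewrite (bigD1 v) //= eqxx big1 ?addr0 // => u uv.
by rewrite eq_sym (negbTE uv).
Qed.

Lemma mix_real (V : finType) (x a : V -> R) (r : V -> V) :
  (forall v, 0 <= x v) -> \sum_v x v = 1 -> (forall v, 0 <= a v <= 1) ->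
  let y := fun u => \sum_v x v * (a v * (v == u)%:R + (1 - a v) * (r v == u)%:R) in
  [/\ forall u, 0 <= y u, \sum_u y u = 1 &
      forall u, y u != 0 -> exists2 v, x v != 0 &
         ((a v != 0) && (u == v)) || ((a v != 1) && (u == r v))].
Proof.
move=> x0 x1 a01 y; split.
- move=> u; apply: sumr_ge0 => v _; apply: mulr_ge0 => //.
  have /andP[a0 a1] := a01 v.
  by apply: addr_ge0; apply: mulr_ge0; rewrite ?subr_ge0 ?ler0n.
- rewrite /y exchange_big /= -[RHS]x1; apply: eq_bigr => v _.
  rewrite -mulr_sumr big_split /= -!mulr_sumr !sum_delta1 !mulr1.
  by rewrite addrC subrK mulr1.
- move=> u yu.
  case: (pickP (fun v => (x v != 0) &&
     (((a v != 0) && (u == v)) || ((a v != 1) && (u == r v))))) =>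
     [v /andP[xv hv]|none]; first by exists v.
  move: yu; rewrite /y big1 ?eqxx // => v _.
  have := none v; case: (eqVneq (x v) 0) => [->|xv]; first by rewrite mul0r.
  rewrite /= => /norP [h1 h2].
  have t1 : a v * (v == u)%:R = 0.
    case: (eqVneq v u) => [vu|vu]; last by rewrite mulr0.
    by move: h1; rewrite vu eqxx andbT negbK => /eqP->; rewrite mul0r.
  have t2 : (1 - a v) * (r v == u)%:R = 0.
    case: (eqVneq (r v) u) => [ru|ru]; last by rewrite mulr0.
    by move: h2; rewrite -ru eqxx andbT negbK => /eqP->; rewrite subrr mul0r.
  by rewrite t1 t2 addr0 mulr0.
Qed.

End Real.

Theorem lemma5p2 (R : realType) (n : nat) (B : {set {set 'I_n.+1}}) :
  building_set B -> connected_bs B -> flag (nested B) ->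
  forall I : {set 'I_n.+1}, ~~ odd #|I| ->
  homotopy_equivalent R (realization R (KB_I B I))
                        (realization R (KB_odd B I)).
Proof.
move=> bsB _ fl I evI.
pose V := {set 'I_n.+1}.
pose Cf := C B I.
pose mixf (x : {ptws V -> R}) (a : V -> R) : {ptws V -> R} :=
  fun u => \sum_(v : V) x v * (a v * (v == u)%:R + (1 - a v) * (Cf v == u)%:R).
have Xmix : forall (x : {ptws V -> R}) (a : V -> R),
    realization R (KB_I B I) x -> (forall v, 0 <= a v <= 1) ->
    (forall v v', x v != 0 -> x v' != 0 -> a v != 1 -> a v' != 0 -> ~~ (v' \proper v)) ->
    realization R (KB_I B I) (mixf x a).
  move=> x a [x0 x1 [sx nx]] a01 gap.
  have [y0 y1 ysupp] := @mix_real R V x a Cf x0 x1 a01.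
  split => //.
  have h1 : forall v, v \in [set v | x v != 0] -> odd #|v :&: I|.
    by move=> v vs; have := subsetP sx v vs; rewrite inE.
  have h2 : forall v v', v \in [set v | x v != 0] -> v' \in [set v | x v != 0] ->
      a v != 1 -> a v' != 0 -> ~~ (v' \proper v).
    by move=> v v'; rewrite !inE => xv xv' cv mv'; apply: gap.
  have h3 : forall u, u \in [set u | mixf x a u != 0] -> exists2 v, v \in [set v | x v != 0] &
      ((a v != 0) && (u == v)) || ((a v != 1) && (u == Cf v)).
    by move=> u; rewrite inE => /ysupp [v xv h]; exists v; rewrite ?inE.
  have [nS oS] := supp_nested bsB fl nx h1 h2 h3.
  split => //; apply/subsetP => u uS; rewrite inE; exact: oS.
have Ysub : forall x : {ptws V -> R}, realization R (KB_odd B I) x -> realization R (KB_I B I) x.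
  move=> x [x0 x1 [sx nx]]; split => //; split => //.
  apply/subsetP => v vs; have := subsetP sx v vs; rewrite !inE => /and3P[_ vI ov].
  by rewrite (setIidPl vI).
have Yfix : forall x : {ptws V -> R}, realization R (KB_odd B I) x -> mixf x (fun=> 0) = x.
  move=> x [x0 x1 [sx nx]]; apply/funext => u.
  rewrite /mixf -[RHS](sum_delta x u); apply: eq_bigr => v _.
  rewrite mul0r add0r subr0 mul1r; case: (eqVneq (x v) 0) => [->|xv]; first by rewrite !mul0r.
  have := subsetP sx v; rewrite !inE => /(_ xv) /and3P[vB vI ov].
  by rewrite /Cf C_id.
have fY : forall x : {ptws V -> R}, realization R (KB_I B I) x ->
    realization R (KB_odd B I) (mixf x (fun=> 0)).
  move=> x xX.
  have [y0 y1 [_ nS]] : realization R (KB_I B I) (mixf x (fun=> 0)).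
    apply: Xmix => //; first by move=> v; rewrite lexx ler01.
    by move=> v v' _ _ _; rewrite eqxx.
  case: xX => [x0 x1 [sx nx]].
  have a01 : forall v : V, 0 <= (fun=> 0 : R) v <= 1 by move=> v; rewrite lexx ler01.
  have [_ _ ysupp] := @mix_real R V x (fun=> 0) Cf x0 x1 a01.
  split => //; split => //; apply/subsetP => u; rewrite inE => /ysupp [v xv].
  rewrite eqxx /= => /andP[_ /eqP->].
  have vs : v \in [set v | x v != 0] by rewrite inE.
  have [vB vT] := nested_mem nx vs.
  have ov : odd #|v :&: I| by have := subsetP sx v vs; rewrite inE.
  have [CB _ CI oC] := C_in bsB vB vT ov.
  by rewrite inE CB CI /=; rewrite (setIidPl CI) in oC.
exists (fun x => mixf x (fun=> 0)), id; split.
- apply: continuous_subspaceT; apply: ptws_continuous => u; rewrite /mixf.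
  apply: sum_continuous => v; apply: mul_continuous.
    exact: (@proj_continuous V (fun=> R) v).
  exact: cst_continuous.
- by move=> _ [x xX <-]; exact: fY.
- by apply: continuous_subspaceT => x; exact: cvg_id.
- by move=> _ [x xY <-]; exact: Ysub.
split.
- exists (fun p : {ptws V -> R} * R => mixf p.1 (fun v => mu n #|v| p.2)); split.
  + apply: continuous_subspaceT; apply: ptws_continuous => u; rewrite /mixf.
    apply: sum_continuous => v; apply: mul_continuous.
      exact: eval_fst_continuous.
    have muc : continuous (fun p : {ptws V -> R} * R => mu n #|v| p.2).
      apply: clamp_continuous; apply: add_continuous; last exact: cst_continuous.
      apply: sub_continuous; last exact: cst_continuous.
      apply: mul_continuous; first exact: cst_continuous.
      exact: snd_continuous'.
    apply: add_continuous; apply: mul_continuous; try exact: cst_continuous.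
      exact: muc.
    by apply: sub_continuous => //; exact: cst_continuous.
  + move=> x t xX /andP[t0 t1]; apply: Xmix => //; first by move=> v; exact: mu_bounds.
    move=> v v' _ _ c m; apply/negP => /proper_card lt; move: c.
    by rewrite (mu_gap lt m) eqxx.
  + move=> x xX /=; apply/funext => u; rewrite /mixf; apply: eq_bigr => v _.
    by rewrite mu0 //; apply: leq_trans (max_card _) _; rewrite card_ord.
  + move=> x xX /=; apply/funext => u; rewrite /mixf -[RHS](sum_delta x u).
    by apply: eq_bigr => v _; rewrite mu1 subrr mul0r addr0 mul1r.
- exists (fun p : {ptws V -> R} * R => p.1); split.
  + by apply: continuous_subspaceT; exact: fst_continuous'.
  + by move=> x t xY _.
  + by move=> x xY /=; rewrite (Yfix x xY).
  + by [].
Qed.
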